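(* Let $(X,d)$ be a complete metric space and let $T\colon X\to X$ be a mapping satisfying: (i) for every $\varepsilon>0$ there exists $\delta>0$ such that for all $x,y\in X$, $\frac{1}{2}\{d(x,Tx)+d(y,Ty)\}<\varepsilon+\delta$ implies $d(Tx,Ty)\le\varepsilon$; (ii) for all $x,y\in X$, $x\neq y$ implies $d(Tx,Ty)<\frac{1}{2}\{d(x,Tx)+d(y,Ty)\}$. Then $T$ has a unique fixed point. *)

(* Defs.v *)
From Stdlib Require Import Reals.
Open Scope R_scope.

Definition is_metric {X : Type} (d : X -> X -> R) : Prop :=
  (forall x y, 0 <= d x y) /\
  (forall x y, d x y = 0 <-> x = y) /\
  (forall x y, d x y = d y x) /\
  (forall x y z, d x z <= d x y + d y z).

Definition cauchy_seq {X : Type} (d : X -> X -> R) (u : nat -> X) : Prop :=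
  forall eps, 0 < eps -> exists N : nat,
    forall m n, (N <= m)%nat -> (N <= n)%nat -> d (u m) (u n) < eps.

Definition seq_converges_to {X : Type} (d : X -> X -> R) (u : nat -> X) (l : X) : Prop :=
  forall eps, 0 < eps -> exists N : nat, forall n, (N <= n)%nat -> d (u n) l < eps.

Definition complete_metric {X : Type} (d : X -> X -> R) : Prop :=
  forall u : nat -> X, cauchy_seq d u -> exists l, seq_converges_to d u l.

(* Main.v *)
Require Import Defs.
From Stdlib Require Import Reals Lra Lia Classical.
Open Scope R_scope.

Theorem theorem2p1 (X : Type) (x0 : X) (d : X -> X -> R)
  (Hmetric : is_metric d) (Hcomplete : complete_metric d) (T : X -> X)
  (Hi : forall eps, 0 < eps -> exists delta, 0 < delta /\
          forall x y, (d x (T x) + d y (T y)) / 2 < eps + delta ->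
                      d (T x) (T y) <= eps)
  (Hii : forall x y, x <> y -> d (T x) (T y) < (d x (T x) + d y (T y)) / 2) :
  exists! x : X, T x = x.
Proof.
  destruct Hmetric as [Hpos [Hzero [Hsym Htri]]].
  set (x := fun n => Nat.iter n T x0).
  set (a := fun n => d (x n) (x (S n))).
  assert (HxS : forall n, x (S n) = T (x n)) by reflexivity.
  assert (Hdec : Un_decreasing a).
  { intro n. unfold a. rewrite !HxS.
    destruct (classic (x n = T (x n))) as [E|E].
    - rewrite <- E. rewrite <- E. pose proof (Hpos (x n) (x n)). lra.
    - pose proof (Hii _ _ E). lra. }
  assert (Hlb : has_lb a).
  { exists 0. intros y [i ->]. unfold opp_seq. pose proof (Hpos (x i) (x (S i))).
    unfold a. lra. }
  destruct (decreasing_cv a Hdec Hlb) as [l Hl].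
  pose proof (decreasing_ineq a l Hdec Hl) as Hle.
  assert (Hl0 : l <= 0).
  { destruct (Rle_or_lt l 0) as [H|H]; [exact H|exfalso].
    destruct (Hi l H) as [delta [Hd Hdel]].
    destruct (Hl delta Hd) as [N HN].
    specialize (HN N (le_n N)). unfold Rdist in HN.
    apply Rabs_def2 in HN. destruct HN as [HN1 HN2].
    pose proof (Hdec N). pose proof (Hdec (S N)).
    assert (Hs : a (S N) <= l).
    { unfold a. rewrite (HxS (S N)), (HxS N). apply Hdel.
      rewrite <- (HxS N), <- (HxS (S N)). fold (a N). fold (a (S N)). lra. }
    pose proof (Hle (S N)). pose proof (Hle (S (S N))).
    assert (E : x (S N) <> x (S (S N))).
    { intro E. assert (a (S N) = 0) by (unfold a; rewrite E; apply Hzero; reflexivity). lra. }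
    pose proof (Hii _ _ E) as H5. rewrite <- !HxS in H5. fold (a (S N)) in H5.
    fold (a (S (S N))) in H5. lra. }
  assert (Ha : forall eps, 0 < eps -> exists N, forall n, (N <= n)%nat -> a n < eps).
  { intros eps He. destruct (Hl eps He) as [N HN]. exists N. intros n Hn.
    specialize (HN n Hn). unfold Rdist in HN. apply Rabs_def2 in HN. lra. }
  assert (Hc : cauchy_seq d x).
  { intros eps He. destruct (Hi (eps/2) ltac:(lra)) as [delta [Hd Hdel]].
    destruct (Ha (eps/2) ltac:(lra)) as [N HN]. exists (S N).
    intros m n Hm Hn. destruct m as [|m]; [lia|]. destruct n as [|n]; [lia|].
    rewrite !HxS. assert (d (T (x m)) (T (x n)) <= eps/2); [|lra].
    apply Hdel. rewrite <- !HxS. fold (a m) (a n).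
    pose proof (HN m ltac:(lia)). pose proof (HN n ltac:(lia)). lra. }
  destruct (Hcomplete x Hc) as [z Hz].
  assert (Hfix : T z = z).
  { apply Hzero. rewrite Hsym.
    assert (Hb : forall n, d z (T z) <= 2 * d z (x (S n)) + a n).
    { intro n. pose proof (Htri z (x (S n)) (T z)).
      assert (d (T (x n)) (T z) <= (a n + d z (T z)) / 2).
      { destruct (classic (x n = z)) as [E|E].
        - rewrite E. rewrite (proj2 (Hzero _ _) eq_refl).
          pose proof (Hpos (x n) (x (S n))). pose proof (Hpos z (T z)). unfold a. lra.
        - pose proof (Hii _ _ E). unfold a. rewrite HxS. lra. }
      rewrite HxS in H |- *. lra. }
    apply Rle_antisym; [|apply Hpos].
    apply Rnot_lt_le. intro Hp.
    destruct (Hz (d z (T z) / 4) ltac:(lra)) as [N1 HN1].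
    destruct (Ha (d z (T z) / 4) ltac:(lra)) as [N2 HN2].
    specialize (Hb (N1 + N2)%nat).
    specialize (HN1 (S (N1 + N2)) ltac:(lia)). specialize (HN2 (N1 + N2)%nat ltac:(lia)).
    rewrite Hsym in HN1. lra. }
  exists z. split; [exact Hfix|].
  intros w Hw. destruct (classic (z = w)) as [E|E]; [exact E|exfalso].
  pose proof (Hii _ _ E). rewrite Hfix, Hw in H.
  rewrite (proj2 (Hzero z z) eq_refl), (proj2 (Hzero w w) eq_refl) in H.
  pose proof (Hpos z w). lra.
Qed.
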